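(* Let $m$ be an integer and $i\geq 2$. (i) If $m=N_i(1+(x-1)^5h(x))$ for some $h\in\mathbb Z[x]$, then for every $2\leq j\leq i$ there is $h_j\in\mathbb Z[x]$ with $m=N_j(1+(x-1)^5h_j(x))$ and $3\mid h_j(1)$ if and only if $3\mid h(1)$; and there are integers $A,B$ with $3m=N_1(1-x+9(A+B(1-x)))$, where $3\nmid A$ if $3\nmid h(1)$ and $3\mid A$ if $3\mid h(1)$. (ii) If $m=N_i(1+(x-1)^7t(x))$ for some $t\in\mathbb Z[x]$, then for every $2\leq j\leq i$ there is $t_j\in\mathbb Z[x]$ with $m=N_j(1+(x-1)^7t_j(x))$ and $3\mid t_j(1)$ if and only if $3\mid t(1)$.
   Context: For $k\geq1$, $\omega_k=e^{2\pi i/3^k}$ and $N_k(F)=\prod_{1\leq \ell\leq 3^k,\ 3\nmid \ell}F(\omega_k^\ell)$. *)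

(* Defs.v *)
From HB Require Import structures.
From mathcomp Require Import all_boot all_order all_algebra all_field.
Set Implicit Arguments. Unset Strict Implicit. Unset Printing Implicit Defensive.
Import Order.TTheory GRing.Theory Num.Theory.
Local Open Scope ring_scope.

(* omega k = e^{2 pi i / 3^k} in algC: (3^k).-root (-1) is the 3^k-th root of
   -1 of minimal nonnegative argument, i.e. e^{i pi / 3^k}; its square is
   e^{2 pi i / 3^k}. *)
Definition omega (k : nat) : algC := ((3 ^ k)%N.-root (-1)) ^+ 2.

Definition Nk (k : nat) (F : {poly int}) : algC :=
  \prod_(1 <= l < (3 ^ k).+1 | ~~ (3 %| l)%N) (map_poly intr F).[omega k ^+ l].

(* Main.v *)
Require Import Defs.
From HB Require Import structures.
From mathcomp Require Import all_boot all_order all_algebra all_field.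
From mathcomp Require Import ring lra zify.
Set Implicit Arguments. Unset Strict Implicit. Unset Printing Implicit Defensive.
Import Order.TTheory GRing.Theory Num.Theory.
Local Open Scope ring_scope.

Lemma real_contra (R : realFieldType) (x y s : R) :
  x^+2 + y^+2 = 1 -> 0 <= y -> 0 <= s -> s^+2 = 3 -> x != 1 ->
  x <= x^+3 - 3*x*y^+2 -> 0 <= 3*x^+2*y - y^+3 ->
  (0 <= - x * s - y -> - x + y * s <= 2 * x) -> False.
Proof.
move=> h1 hy hs hs2 hx1 hA hB hC.
have hxy : x * y^+2 <= 0 by nra.
have [hx hy3] : x <= 0 /\ y^+2 <= 3 * x^+2.
  have [y0|ypos] := eqVneq y 0.
    subst y; split; last nra.
    have : (x - 1) * (x + 1) = 0 by nra.
    move/eqP; rewrite mulf_eq0 subr_eq0 (negbTE hx1) /= addr_eq0 => /eqP ->; lra.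
  have yp : 0 < y by rewrite lt_def ypos hy.
  split; nra.
have hys : y <= - x * s.
  have h0 : 0 <= - x * s by nra.
  rewrite -(@ler_pXn2r _ 2) ?nnegrE //; nra.
have := hC ltac:(lra); nra.
Qed.

Ltac realt := repeat (first [ match goal with H : is_true (_ \is Num.real) |- _ => exact: H end | apply: realB | apply: realD | apply: realM | apply: realX | rewrite realN | rewrite realV | apply: realn | apply: rpred1]).

Lemma lerR (a b : algR) : (a <= b) = (algRval a <= algRval b).
Proof. by []. Qed.

Ltac rmR := rewrite ?lerR /= ?(rmorphD, rmorphB, rmorphM, rmorphXn, rmorphN, rmorph1, rmorph0, rmorph_nat) /=.

Lemma cube_rect (x y : algC) : (x + 'i * y) ^+ 3 =
  (x ^+ 3 - 3 * x * y ^+ 2) + 'i * (3 * x ^+ 2 * y - y ^+ 3).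
Proof.
have E : (x + 'i * y) ^+ 3 = (x ^+ 3 - 3 * x * y ^+ 2) + 'i * (3 * x ^+ 2 * y - y ^+ 3)
   + (3 * x * y ^+ 2 + 'i * y ^+ 3) * ('i ^+ 2 + 1) by ring.
by rewrite E sqrCi addNr mulr0 addr0.
Qed.

Lemma root_contra (m : nat) : (0 < m)%N ->
  ((3 * m)%N.-root (-1 : algC)) ^+ m != -1.
Proof.
move=> m0; set r := _.-root _; apply/negP => /eqP hrm.
have n0 : (0 < 3 * m)%N by rewrite muln_gt0.
have n1 : (1 < 3 * m)%N by rewrite (@leq_trans 3) // leq_pmulr.
set z := 3.-root r.
have z3 : z ^+ 3 = r by rewrite rootCK.
have zn : z ^+ (3 * m) = -1 by rewrite exprM z3.
have Rx := Creal_Re z; have Ry := Creal_Im z.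
set x := 'Re z in Rx *; set y := 'Im z in Ry *.
have Hz : z = x + 'i * y by rewrite /x /y -Crect.
have nz1 : `|z| = 1.
  apply/eqP; rewrite -(@pexpr_eq1 _ _ (3 * m)) // -normrX zn normrN normr1 //.
have h1 : x ^+ 2 + y ^+ 2 = 1 by rewrite -normC2_rect // -Hz nz1 expr1n.
have Rr1 : x ^+ 3 - 3 * x * y ^+ 2 \is Num.real by realt.
have Rr2 : 3 * x ^+ 2 * y - y ^+ 3 \is Num.real by realt.
have Er : r = (x ^+ 3 - 3 * x * y ^+ 2) + 'i * (3 * x ^+ 2 * y - y ^+ 3) by rewrite -z3 Hz cube_rect.
have ReR : 'Re r = x ^+ 3 - 3 * x * y ^+ 2 by rewrite Er Re_rect.
have ImR : 'Im r = 3 * x ^+ 2 * y - y ^+ 3 by rewrite Er Im_rect.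
have hy : 0 <= y by apply: Im_rootC_ge0.
have hA : x <= x ^+ 3 - 3 * x * y ^+ 2.
  by rewrite -ReR; apply: (rootC_Re_max n0 zn hy).
have hB : 0 <= 3 * x ^+ 2 * y - y ^+ 3 by rewrite -ImR; apply: Im_rootC_ge0.
set s := sqrtC (3 : algC).
have hs : 0 <= s by rewrite sqrtC_ge0 ler0n.
have Rs : s \is Num.real by apply: ger0_real.
have hs2 : s ^+ 2 = 3 by rewrite sqrtCK.
have hC : 0 <= - x * s - y -> - x + y * s <= 2 * x.
  move=> him.
  set w := z * ((-1 - 'i * s) / 2).
  have Rw1 : (- x + y * s) / 2 \is Num.real by realt.
  have Rw2 : (- x * s - y) / 2 \is Num.real by realt.
  have Ew : w = (- x + y * s) / 2 + 'i * ((- x * s - y) / 2).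
    have E : w = (- x + y * s) / 2 + 'i * ((- x * s - y) / 2) + (- y * s / 2) * ('i ^+ 2 + 1).
      by rewrite /w Hz; ring.
    by rewrite E sqrCi addNr mulr0 addr0.
  have c3 : (-1 - 'i * s) ^+ 3 = 8.
    have E : (-1 - 'i * s) ^+ 3 = 8 + (s ^+ 2 - 3) * (3 + 'i * s) - ('i ^+ 2 + 1) * (3 * s ^+ 2 + 'i * s ^+ 3) by ring.
    by rewrite E hs2 sqrCi subrr addNr mul0r mul0r addr0 subr0.
  have w3 : w ^+ 3 = r.
    have e8 : (2:algC) ^+ 3 = 8 by rewrite -natrX.
    by rewrite /w exprMn expr_div_n c3 e8 divff ?mulr1 // pnatr_eq0.
  have hw : 0 <= 'Im w by rewrite Ew Im_rect // divr_ge0 ?ler0n.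
  have := rootC_Re_max (isT : (0 < 3)%N) w3 hw.
  rewrite -/z -/x Ew Re_rect // ler_pdivrMr ?ltr0n // => h.
  by rewrite [2 * x]mulrC.
have hx1 : x != 1.
  apply/eqP => ex1.
  have y0 : y ^+ 2 = 0 by apply: (@addrI _ 1); rewrite addr0 -{2}h1 ex1 expr1n.
  have y00 : y = 0 by apply/eqP; move: y0 => /eqP; rewrite expf_eq0.
  move: zn; rewrite Hz ex1 y00 mulr0 addr0 expr1n => /eqP.
  by rewrite -subr_eq0 opprK (eqr_nat _ 2 0).
apply: (@real_contra algR (in_algR Rx) (in_algR Ry) (in_algR Rs)).
- by apply: val_inj; rmR.
- by rmR.
- by rmR.
- by apply: val_inj; rmR.
- by apply/eqP => /(congr1 algRval) /=; rmR => /eqP; rewrite (negbTE hx1).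
- by rmR.
- by rmR.
- by rmR.
Qed.


Lemma omega_prim k : (0 < k)%N -> (3 ^ k)%N.-primitive_root (omega k).
Proof.
move=> k0.
have En : (3 ^ k = 3 * 3 ^ k.-1)%N by rewrite -expnS prednK.
have n0 : (0 < 3 ^ k)%N by rewrite expn_gt0.
set r := (3 ^ k)%N.-root (-1 : algC).
have rn : r ^+ (3 ^ k) = -1 by rewrite rootCK.
have wn : omega k ^+ (3 ^ k) = 1 by rewrite /omega -exprM mulnC exprM rn sqrrN expr1n.
have [d pd dn] := prim_order_exists n0 wn.
have [a ak Ed] : exists2 a, (a <= k)%N & d = (3 ^ a)%N by apply/dvdn_pfactor.
rewrite {}Ed in pd dn.
have [Ea | ak'] := eqVneq a k; first by rewrite Ea in pd.
have dm : (3 ^ a %| 3 ^ k.-1)%N.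
  by rewrite dvdn_exp2l // -ltnS prednK // ltn_neqAle ak' ak.
have : omega k ^+ (3 ^ k.-1) == 1 by rewrite -(prim_order_dvd pd).
rewrite /omega -exprM mulnC exprM -/r sqrf_eq1 => /orP [/eqP h1 | /eqP h2].
  move: rn; rewrite En mulnC exprM h1 expr1n => /eqP.
  by rewrite -subr_eq0 opprK (eqr_nat _ 2 0).
have := root_contra (expn_gt0 3 k.-1); rewrite -En -/r h2 eqxx //.
Qed.

Definition stp (R : comRingType) (y : R) (v : R * R * R) : R * R * R :=
  (- v.1.1 + v.2 * y, v.1.1 - v.1.2, v.1.2 - v.2).
Definition Dvec (R : comRingType) (y : R) (e : nat) (a b c : R) := iter e (stp y) (a, b, c).
Definition Gf (R : comRingType) (y : R) (d : R * R * R) : R :=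
  (1 + d.1.1) ^+ 3 + y * d.1.2 ^+ 3 + y ^+ 2 * d.2 ^+ 3 - 3 * y * (1 + d.1.1) * d.1.2 * d.2.
Definition Nf (R : comRingType) (a b c : R) : R := a ^+ 3 + b ^+ 3 + c ^+ 3 - 3 * a * b * c.
Definition P1_5 (R : comRingType) (z a b c : R) : R := ((2%:R * c^+3) + (b^+3) - (3%:R * a * b * c) + (z * c^+3)).
Definition P2_5 (R : comRingType) (z a b c : R) : R := ((81%:R * c^+2) - (9%:R * b) - (81%:R * b * c) + (81%:R * b^+2) + (9%:R * a) - (81%:R * a * c) - (81%:R * a * b) + (81%:R * a^+2) - (5%:R * z * c) + (243%:R * z * c^+2) - (8%:R * z * b) - (216%:R * z * b * c) + (189%:R * z * b^+2) + (10%:R * z * a) - (189%:R * z * a * c) - (162%:R * z * a * b) + (135%:R * z * a^+2) - (5%:R * z^+2 * c) + (258%:R * z^+2 * c^+2) + (z^+2 * b) - (195%:R * z^+2 * b * c) + (141%:R * z^+2 * b^+2) - (141%:R * z^+2 * a * c) - (96%:R * z^+2 * a * b) + (60%:R * z^+2 * a^+2) + (111%:R * z^+3 * c^+2) - (65%:R * z^+3 * b * c) + (34%:R * z^+3 * b^+2) - (34%:R * z^+3 * a * c) - (15%:R * z^+3 * a * b) + (5%:R * z^+3 * a^+2) + (15%:R * z^+4 * c^+2) - (5%:R * z^+4 * b * c) + (z^+4 * b^+2) - (z^+4 * a * c)).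
Definition P1_7 (R : comRingType) (z a b c : R) : R := ((2%:R * c^+3) + (b^+3) - (3%:R * a * b * c) + (z * c^+3)).
Definition P2_7 (R : comRingType) (z a b c : R) : R := (- (32%:R * c) + (3753%:R * c^+2) + (21%:R * b) - (3024%:R * b * c) + (2376%:R * b^+2) - (7%:R * a) - (2376%:R * a * c) - (1809%:R * a * b) + (1323%:R * a^+2) + (z * c) + (2484%:R * z * c^+2) - (1701%:R * z * b * c) + (1107%:R * z * b^+2) - (1107%:R * z * a * c) - (675%:R * z * a * b) + (378%:R * z * a^+2) + (757%:R * z^+2 * c^+2) - (406%:R * z^+2 * b * c) + (196%:R * z^+2 * b^+2) - (196%:R * z^+2 * a * c) - (82%:R * z^+2 * a * b) + (28%:R * z^+2 * a^+2) + (83%:R * z^+3 * c^+2) - (28%:R * z^+3 * b * c) + (7%:R * z^+3 * b^+2) - (7%:R * z^+3 * a * c) - (z^+3 * a * b) + (z^+4 * c^+2)).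
Definition P3_7 (R : comRingType) (z a b c : R) : R := (- (9%:R * c) + (243%:R * c^+2) - (243%:R * b * c) + (243%:R * b^+2) + (9%:R * a) - (243%:R * a * c) - (243%:R * a * b) + (243%:R * a^+2) - (20%:R * z * c) + (891%:R * z * c^+2) + (7%:R * z * b) - (810%:R * z * b * c) + (729%:R * z * b^+2) + (7%:R * z * a) - (729%:R * z * a * c) - (648%:R * z * a * b) + (567%:R * z * a^+2)).
Definition Q5 (R : comRingType) (z a b c : R) : R := ((c^+3) + (b^+3) - (3%:R * a * b * c) + (a^+3) + (2%:R * z * c^+3) + (z * b^+3) - (3%:R * z * a * b * c) + (z^+2 * c^+3)).
Definition Q2 (R : comRingType) (z a b c : R) : R := (- (5%:R * c) + (258%:R * c^+2) + (b) - (195%:R * b * c) + (141%:R * b^+2) - (141%:R * a * c) - (96%:R * a * b) + (60%:R * a^+2) + (111%:R * z * c^+2) - (65%:R * z * b * c) + (34%:R * z * b^+2) - (34%:R * z * a * c) - (15%:R * z * a * b) + (5%:R * z * a^+2) + (15%:R * z^+2 * c^+2) - (5%:R * z^+2 * b * c) + (z^+2 * b^+2) - (z^+2 * a * c)).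
Definition Q0 (R : comRingType) (z a b c : R) : R := ((27%:R * c^+2) - (3%:R * b) - (27%:R * b * c) + (27%:R * b^+2) + (3%:R * a) - (27%:R * a * c) - (27%:R * a * b) + (27%:R * a^+2) - (2%:R * z * c) + (81%:R * z * c^+2) - (3%:R * z * b) - (72%:R * z * b * c) + (63%:R * z * b^+2) + (3%:R * z * a) - (63%:R * z * a * c) - (54%:R * z * a * b) + (45%:R * z * a^+2)).

Lemma ident5 (R : comRingType) (z a b c : R) :
  Gf (1 + z) (Dvec (1 + z) 5 a b c) - 1 - z ^+ 5 * Nf a b c =
  z ^+ 6 * P1_5 z a b c + 3 * P2_5 z a b c.
Proof. rewrite /Gf /Dvec /stp /Nf /P1_5 /P2_5 /=. ring. Qed.

Lemma ident7 (R : comRingType) (z a b c : R) :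
  Gf (1 + z) (Dvec (1 + z) 7 a b c) - 1 - z ^+ 7 * Nf a b c =
  z ^+ 8 * P1_7 z a b c + 3 * (z ^+ 2 * P2_7 z a b c) + 3 * (3 * P3_7 z a b c).
Proof. rewrite /Gf /Dvec /stp /Nf /P1_7 /P2_7 /P3_7 /=. ring. Qed.

Lemma ident1 (R : comRingType) (z a b c : R) :
  Gf (1 + z) (Dvec (1 + z) 5 a b c) - 1 =
  3 * (z * (a + b + c)) + 3 * (3 * Q0 z a b c) + 3 * (z ^+ 2 * Q2 z a b c) + z ^+ 5 * Q5 z a b c.
Proof. rewrite /Gf /Dvec /stp /Q0 /Q2 /Q5 /=. ring. Qed.

Lemma prod_ord3 (n : nat) (g : nat -> algC) : (3 %| n)%N ->
  \prod_(1 <= l < n.+1 | ~~ (3 %| l)%N) g l = \prod_(l < n | ~~ (3 %| l)%N) g l.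
Proof.
move=> n3; have [->|n0] := posnP n; first by rewrite big_geq // big_ord0.
rewrite big_mkcond big_nat_recr //= n3 mulr1 -big_mkcond /=.
by rewrite -(big_mkord (fun l => ~~ (3 %| l)%N)) [RHS]big_ltn_cond.
Qed.

Lemma dvd3_mod x n : (3 %| n)%N -> (3 %| x %% n)%N = (3 %| x)%N.
Proof.
move=> n3; rewrite {2}(divn_eq x n) dvdn_addr //; exact: dvdn_mull.
Qed.

Lemma Nk_inv k F (eta : algC) : (0 < k)%N -> (3 ^ k)%N.-primitive_root eta ->
  \prod_(l < 3 ^ k | ~~ (3 %| l)%N) (map_poly intr F).[eta ^+ l] =
  \prod_(l < 3 ^ k | ~~ (3 %| l)%N) (map_poly intr F).[omega k ^+ l].
Proof.
move=> k0 peta.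
set n := (3 ^ k)%N.
have n0 : (0 < n)%N by rewrite expn_gt0.
have n3 : (3 %| n)%N by rewrite /n -(prednK k0) expnS dvdn_mulr.
have pz := omega_prim k0.
have [a Ea] := prim_rootP pz (prim_expr_order peta).
have ca : coprime a n by rewrite -(prim_root_exp_coprime _ pz) -Ea.
have c3a : coprime 3 a.
  by rewrite coprime_sym; move: ca; rewrite /n coprime_pexpr.
pose h (i : 'I_n) : 'I_n := Ordinal (ltn_pmod (a * i) n0).
have hE i : omega k ^+ (h i) = eta ^+ i by rewrite /= (prim_expr_mod pz) exprM -Ea.
have hinj : injective h.
  move=> i j /(congr1 (fun t : 'I_n => omega k ^+ t)); rewrite !hE => /eqP.
  rewrite (eq_prim_root_expr peta) !modn_small // => /eqP; exact: val_inj.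
rewrite [RHS](reindex_inj hinj); apply: eq_big => [i|i _]; last by rewrite hE.
by rewrite /= dvd3_mod // Gauss_dvdr.
Qed.

Lemma NkE k F : (0 < k)%N ->
  Nk k F = \prod_(l < 3 ^ k | ~~ (3 %| l)%N) (map_poly intr F).[omega k ^+ l].
Proof.
move=> k0; rewrite /Nk prod_ord3 // -(prednK k0) expnS dvdn_mulr //.
Qed.

Lemma Nk_mul k F G : Nk k (F * G) = Nk k F * Nk k G.
Proof.
by rewrite /Nk -big_split /=; apply: eq_bigr => l _; rewrite rmorphM hornerM.
Qed.

Definition Phi (k : nat) : {poly int} := 1 + 'X ^+ (3 ^ k.-1) + 'X ^+ (2 * 3 ^ k.-1).

Lemma Phi_root k (x : algC) : (0 < k)%N -> (3 ^ k)%N.-primitive_root x ->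
  (map_poly intr (Phi k)).[x] = 0.
Proof.
move=> k0 px; set m := (3 ^ k.-1)%N.
have Ek : (3 ^ k = m * 3)%N by rewrite /m -expnSr prednK.
have t3 : (x ^+ m) ^+ 3 = 1 by rewrite -exprM -Ek prim_expr_order.
have t1 : x ^+ m != 1.
  rewrite -(prim_order_dvd px) Ek; apply/negP => /dvdn_leq.
  rewrite expn_gt0 /= => /(_ isT); rewrite leqNgt ltn_Pmulr //.
  by rewrite expn_gt0.
rewrite /Phi !rmorphD /= rmorph1 !map_polyXn !hornerE mulnC exprM.
have : (x ^+ m - 1) * (1 + x ^+ m + x ^+ m ^+ 2) = 0.
  have -> : (x ^+ m - 1) * (1 + x ^+ m + x ^+ m ^+ 2) = (x ^+ m) ^+ 3 - 1 by ring.
  by rewrite t3 subrr.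
by move/eqP; rewrite mulf_eq0 subr_eq0 (negbTE t1) /= => /eqP.
Qed.

Lemma Nk_congr k F F' q : (0 < k)%N -> F = F' + Phi k * q -> Nk k F = Nk k F'.
Proof.
move=> k0 ->; rewrite /Nk; apply: eq_bigr => l /= l3.
rewrite rmorphD rmorphM hornerD hornerM Phi_root ?mul0r ?addr0 //.
rewrite prim_root_exp_coprime ?omega_prim //.
by rewrite coprime_pexpr // coprime_sym prime_coprime.
Qed.

Lemma norm3 (R : comRingType) (c x a0 a1 a2 : R) : c ^+ 2 + c + 1 = 0 ->
  (a0 + x * a1 + x ^+ 2 * a2) * (a0 + (x * c) * a1 + (x * c) ^+ 2 * a2) *
  (a0 + (x * c ^+ 2) * a1 + (x * c ^+ 2) ^+ 2 * a2) =
  a0 ^+ 3 + x ^+ 3 * a1 ^+ 3 + (x ^+ 3) ^+ 2 * a2 ^+ 3 - 3 * x ^+ 3 * a0 * a1 * a2.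
Proof.
move=> hc.
have E : (a0 + x * a1 + x ^+ 2 * a2) * (a0 + (x * c) * a1 + (x * c) ^+ 2 * a2) *
  (a0 + (x * c ^+ 2) * a1 + (x * c ^+ 2) ^+ 2 * a2) =
  a0 ^+ 3 + x ^+ 3 * a1 ^+ 3 + (x ^+ 3) ^+ 2 * a2 ^+ 3 - 3 * x ^+ 3 * a0 * a1 * a2
  + (c ^+ 2 + c + 1) * (- ((x^+2 * a2)^+3) - ((x * a1)^+3) + (3%:R * a0 * (x * a1) * (x^+2 * a2)) + (a0^+2 * (x^+2 * a2)) + (a0^+2 * (x * a1)) + (c * (x^+2 * a2)^+3) + (c * (x * a1)^+3) - (2%:R * c * a0 * (x * a1) * (x^+2 * a2)) + (c * a0 * (x * a1)^+2) - (c * a0^+2 * (x^+2 * a2)) + (c^+2 * a0 * (x^+2 * a2)^+2) + (c^+2 * a0 * (x * a1) * (x^+2 * a2)) + (c^+2 * a0^+2 * (x^+2 * a2)) - (c^+3 * (x^+2 * a2)^+3) + (c^+3 * (x * a1)^+2 * (x^+2 * a2)) - (c^+3 * a0 * (x^+2 * a2)^+2) + (c^+3 * a0 * (x * a1) * (x^+2 * a2)) + (c^+4 * (x^+2 * a2)^+3) + (c^+4 * (x * a1) * (x^+2 * a2)^+2) + (c^+4 * a0 * (x^+2 * a2)^+2)) by ring.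
by rewrite E hc mul0r addr0.
Qed.

Lemma evalX3 (P : {poly int}) (t : algC) :
  (map_poly intr (P \Po 'X ^+ 3)).[t] = (map_poly intr P).[t ^+ 3].
Proof. by rewrite map_comp_poly horner_comp map_polyXn hornerXn. Qed.

Lemma shift_range a n (P : pred nat) (g : nat -> algC) :
  \prod_(a <= i < (a + n)%N | P i) g i = \prod_(0 <= i < n | P (i + a)%N) g (i + a)%N.
Proof. by rewrite -{1}[a]add0n big_addn addKn. Qed.

Lemma Nk_descent k (F F0 F1 F2 : {poly int}) : (0 < k)%N ->
  F = F0 \Po 'X ^+ 3 + 'X * (F1 \Po 'X ^+ 3) + 'X ^+ 2 * (F2 \Po 'X ^+ 3) ->
  Nk k.+1 F = Nk k (F0 ^+ 3 + 'X * F1 ^+ 3 + 'X ^+ 2 * F2 ^+ 3 - 3 * 'X * F0 * F1 * F2).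
Proof.
move=> k0 EF.
set G := (X in Nk k X).
rewrite (NkE _ (ltn0Sn k)) (NkE _ k0).
set n := (3 ^ k)%N.
have n3 : (3 %| n)%N by rewrite /n -(prednK k0) expnS dvdn_mulr.
have E3 : (3 ^ k.+1 = n + n + n)%N by rewrite expnS /n; lia.
set z := omega k.+1.
have pz : (3 ^ k.+1)%N.-primitive_root z by apply: omega_prim.
have peta : n.-primitive_root (z ^+ 3).
  have := dvdn_prim_root pz (dvdn_exp2l 3 (leqnSn k)).
  by rewrite expnS mulnK // expn_gt0.
have pc : 3.-primitive_root (z ^+ n).
  have := dvdn_prim_root pz (_ : (3 %| 3 ^ k.+1)%N).
  by rewrite expnS mulKn //; apply; rewrite dvdn_mulr.
rewrite -(Nk_inv _ k0 peta).
rewrite -(big_mkord (fun l => ~~ (3 %| l)%N) (fun l => (map_poly intr F).[z ^+ l])).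
rewrite -(big_mkord (fun l => ~~ (3 %| l)%N) (fun l => (map_poly intr G).[(z ^+ 3) ^+ l])).
rewrite E3 (@big_cat_nat _ _ _ (n + n)) ?leq_addr //= (@big_cat_nat _ _ _ n) ?leq_addr //=.
rewrite (shift_range n n) (shift_range (n + n) n).
rewrite [X in _ * X * _](eq_bigl (fun i => ~~ (3 %| i)%N)); last by move=> i; rewrite dvdn_addl.
rewrite [X in _ * X](eq_bigl (fun i => ~~ (3 %| i)%N)); last by move=> i; rewrite dvdn_addl // dvdn_add.
rewrite -!big_split /=; apply: eq_bigr => i _.
set c := z ^+ n.
have c3 : c ^+ 3 = 1 by apply: prim_expr_order.
have hc : c ^+ 2 + c + 1 = 0.
  have c1 : c != 1 by rewrite -[c]expr1 -(prim_order_dvd pc).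
  have : (c - 1) * (c ^+ 2 + c + 1) = 0.
    have -> : (c - 1) * (c ^+ 2 + c + 1) = c ^+ 3 - 1 by ring.
    by rewrite c3 subrr.
  by move/eqP; rewrite mulf_eq0 subr_eq0 (negbTE c1) /= => /eqP.
set x := z ^+ i.
have e1 : z ^+ (i + n) = x * c by rewrite exprD.
have e2 : z ^+ (i + (n + n)) = x * c ^+ 2 by rewrite !exprD expr2.
have e3 : (z ^+ 3) ^+ i = x ^+ 3 by rewrite /x -!exprM [(3 * i)%N]mulnC.
rewrite e1 e2 e3.
clearbody x c.
have evF (t : algC) : (map_poly intr F).[t] = (map_poly intr F0).[t ^+ 3] + t * (map_poly intr F1).[t ^+ 3] + t ^+ 2 * (map_poly intr F2).[t ^+ 3].
  by rewrite EF !rmorphD !rmorphM /= !hornerE !evalX3 map_polyX !hornerE expr2.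
have cube1 : (x * c) ^+ 3 = x ^+ 3 by rewrite exprMn c3 mulr1.
have cube2 : (x * c ^+ 2) ^+ 3 = x ^+ 3 by rewrite exprMn -exprM [(2 * 3)%N]mulnC exprM c3 expr1n mulr1.
rewrite !evF cube1 cube2 norm3 //.
rewrite /G !rmorphB !rmorphD !rmorphM /= map_polyX rmorph_nat !(hornerD, hornerN, hornerM, hornerX, hornerMn, hornerC).
ring.
Qed.

Lemma decomp3 (p : {poly int}) : exists p0 p1 p2 : {poly int},
  p = p0 \Po 'X ^+ 3 + 'X * (p1 \Po 'X ^+ 3) + 'X ^+ 2 * (p2 \Po 'X ^+ 3).
Proof.
elim/poly_ind: p => [|q c [q0 [q1 [q2 Eq]]]].
  by exists 0, 0, 0; rewrite !comp_poly0 !mulr0 !addr0.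
exists (c%:P + 'X * q2), q0, q1.
rewrite Eq !rmorphD !rmorphM /= comp_polyC comp_polyX.
ring.
Qed.

Lemma Dvec_mul (R : comRingType) (x : R) e a b c :
  let d := Dvec (x ^+ 3) e a b c in
  (x - 1) ^+ e * (a + x * b + x ^+ 2 * c) = d.1.1 + x * d.1.2 + x ^+ 2 * d.2.
Proof.
elim: e => [|e IH] /=; first by rewrite expr0 mul1r.
rewrite exprS -mulrA IH /stp /=; ring.
Qed.

Lemma Dvec_morph (R S : comRingType) (f : {rmorphism R -> S}) (y : R) e a b c :
  Dvec (f y) e (f a) (f b) (f c) =
  (f (Dvec y e a b c).1.1, f (Dvec y e a b c).1.2, f (Dvec y e a b c).2).
Proof.
elim: e => [|e IH] //=.
rewrite /Dvec /= -/(Dvec _ e _ _ _) -/(Dvec _ e _ _ _) IH /stp /=.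
by rewrite rmorphD rmorphN rmorphM !rmorphB.
Qed.


Lemma Y1 j : exists p q : {poly int},
  'X ^+ (3 ^ j.+1) - 1 = 3 * ('X - 1) * p + ('X - 1) ^+ 3 * q.
Proof.
elim: j => [|j [p [q E]]].
  by exists (1 + ('X - 1)), 1; rewrite expn1; ring.
set z : {poly int} := 'X - 1 in E *.
set w := 3 * p + z ^+ 2 * q.
exists (w + z * w ^+ 2), (w ^+ 3).
have EY : 'X ^+ (3 ^ j.+1) = 1 + z * w by rewrite -(subrK 1 ('X ^+ _)) E /w; ring.
by rewrite expnSr exprM EY; ring.
Qed.

Lemma three_ideal k : (2 <= k)%N -> exists u v : {poly int},
  3 = Phi k * u + ('X - 1) ^+ 6 * v.
Proof.
move=> k2; have [p [q E]] := Y1 k.-2.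
have Ek : k.-2.+1 = k.-1 by lia.
rewrite Ek in E.
set z : {poly int} := 'X - 1 in E *.
set w1 := (3 * p + z ^+ 2 * q) + z * (3 * p ^+ 2 + 2 * z ^+ 2 * p * q).
have EY : 'X ^+ (3 ^ k.-1) = 1 + 3 * z * p + z ^+ 3 * q by rewrite -(subrK 1 ('X ^+ _)) E; ring.
have EPhi : Phi k = 3 * (1 + z * w1) + z ^+ 6 * q ^+ 2.
  by rewrite /Phi mulnC exprM EY /w1; ring.
set t := - (z * w1).
set w' := 1 + t + t ^+ 2 + t ^+ 3 + t ^+ 4 + t ^+ 5.
exists w', (3 * w1 ^+ 6 - q ^+ 2 * w').
rewrite EPhi /w' /t; ring.
Qed.
Lemma dvdz3X (s : int) : (3 %| s ^+ 3)%Z = (3 %| s)%Z.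
Proof. by rewrite !dvdzE abszX (_ : `|3%R|%N = 3%N) // Euclid_dvdX // andbT. Qed.

Lemma dvd3N (a b c : int) : (3 %| Nf a b c)%Z = (3 %| a + b + c)%Z.
Proof.
set s := a + b + c.
have -> : Nf a b c = s ^+ 3 - 3 * (a^+2 * b + a^+2 * c + a * b^+2 + b^+2 * c + a * c^+2 + b * c^+2 + 3 * a * b * c).
  by rewrite /Nf /s; ring.
rewrite rpredBr; last exact: (dvdz_mulr _ (dvdzz 3)).
exact: dvdz3X.
Qed.

Lemma comp3_at1 (p : {poly int}) : (p \Po 'X ^+ 3).[1] = p.[1].
Proof. by rewrite horner_comp hornerXn expr1n. Qed.

Lemma descF e k (h : {poly int}) : (0 < k)%N ->
  exists h0 h1 h2 : {poly int},
  Nk k.+1 (1 + ('X - 1) ^+ e * h) = Nk k (Gf 'X (Dvec 'X e h0 h1 h2)) /\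
  h.[1] = h0.[1] + h1.[1] + h2.[1].
Proof.
move=> k0; have [h0 [h1 [h2 Eh]]] := decomp3 h.
exists h0, h1, h2; split; last by rewrite Eh !hornerE !comp3_at1.
set d := Dvec 'X e h0 h1 h2.
have Ed : Dvec ('X ^+ 3) e (h0 \Po 'X ^+ 3) (h1 \Po 'X ^+ 3) (h2 \Po 'X ^+ 3) =
   (d.1.1 \Po 'X ^+ 3, d.1.2 \Po 'X ^+ 3, d.2 \Po 'X ^+ 3).
  have := Dvec_morph (comp_poly ('X ^+ 3 : {poly int})) 'X e h0 h1 h2.
  by rewrite /= comp_polyX.
rewrite (@Nk_descent k _ (1 + d.1.1) d.1.2 d.2) //.
have := Dvec_mul ('X : {poly int}) e (h0 \Po 'X ^+ 3) (h1 \Po 'X ^+ 3) (h2 \Po 'X ^+ 3).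
rewrite /= Ed /= -Eh => ->.
by rewrite rmorphD /= comp_polyC polyC1 !addrA.
Qed.

Lemma eval_h' (NN z W : {poly int}) : z = 'X - 1 -> (NN + z * W).[1] = NN.[1].
Proof. by move=> ->; rewrite !hornerE. Qed.

Lemma Nf_at1 (a b c : {poly int}) : (Nf a b c).[1] = Nf a.[1] b.[1] c.[1].
Proof. by rewrite /Nf !hornerE. Qed.

Lemma step5 k (h : {poly int}) : (2 <= k)%N -> exists h' : {poly int},
  Nk k.+1 (1 + ('X - 1) ^+ 5 * h) = Nk k (1 + ('X - 1) ^+ 5 * h') /\
  (3 %| h'.[1])%Z = (3 %| h.[1])%Z.
Proof.
move=> k2; have k0 : (0 < k)%N by apply: ltnW.
have [h0 [h1 [h2 [-> Eh1]]]] := descF 5 h k0.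
have [u [v E3]] := three_ideal k2.
have eX : 1 + ('X - 1) = ('X : {poly int}) by rewrite addrC subrK.
have := ident5 ('X - 1) h0 h1 h2; rewrite eX.
set z := 'X - 1 in E3 *.
set GG := Gf _ _; set NN := Nf _ _ _; set P1 := P1_5 _ _ _ _; set P2 := P2_5 _ _ _ _.
move=> E.
exists (NN + z * (P1 + v * P2)); split.
  apply: (@Nk_congr _ _ _ (u * P2) k0).
  have -> : GG = (GG - 1 - z ^+ 5 * NN) + 1 + z ^+ 5 * NN by ring.
  rewrite E E3; ring.
by rewrite Eh1 -dvd3N (eval_h' _ _ (erefl z)) /NN Nf_at1.
Qed.

Lemma step7 k (h : {poly int}) : (2 <= k)%N -> exists h' : {poly int},
  Nk k.+1 (1 + ('X - 1) ^+ 7 * h) = Nk k (1 + ('X - 1) ^+ 7 * h') /\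
  (3 %| h'.[1])%Z = (3 %| h.[1])%Z.
Proof.
move=> k2; have k0 : (0 < k)%N by apply: ltnW.
have [h0 [h1 [h2 [-> Eh1]]]] := descF 7 h k0.
have [u [v E3]] := three_ideal k2.
have eX : 1 + ('X - 1) = ('X : {poly int}) by rewrite addrC subrK.
have := ident7 ('X - 1) h0 h1 h2; rewrite eX.
set z := 'X - 1 in E3 *.
set GG := Gf _ _; set NN := Nf _ _ _; set P1 := P1_7 _ _ _ _; set P2 := P2_7 _ _ _ _.
set P3 := P3_7 _ _ _ _.
move=> E.
exists (NN + z * (P1 + v * P2 + z ^+ 4 * v ^+ 2 * P3)); split.
  apply: (@Nk_congr _ _ _ (u * z ^+ 2 * P2 + (Phi k * u ^+ 2 + 2 * u * z ^+ 6 * v) * P3) k0).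
  have -> : GG = (GG - 1 - z ^+ 7 * NN) + 1 + z ^+ 7 * NN by ring.
  rewrite E E3; ring.
by rewrite Eh1 -dvd3N (eval_h' _ _ (erefl z)) /NN Nf_at1.
Qed.

Lemma Phi1E : Phi 1 = 1 + 'X + 'X ^+ 2.
Proof. by rewrite /Phi /= expn0 muln1 expr1. Qed.

Lemma red1 (p : {poly int}) : exists (s0 s1 : int) (q : {poly int}),
  p = Phi 1 * q + s0%:P + s1%:P * 'X.
Proof.
elim/poly_ind: p => [|p c [t0 [t1 [q E]]]].
  by exists 0, 0, 0; rewrite mulr0 !add0r mul0r.
exists (c - t1), (t0 - t1), (q * 'X + t1%:P).
rewrite E Phi1E !rmorphB /=; ring.
Qed.

Lemma factor1 (p : {poly int}) : exists s : {poly int}, p = (p.[1])%:P + ('X - 1) * s.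
Proof.
have : root (p - (p.[1])%:P) 1 by rewrite rootE !hornerE subrr.
case/factor_theorem => s Es; exists s.
by rewrite mulrC -polyC1 -Es addrC subrK.
Qed.

Lemma Nk1_lin : Nk 1 (1 - 'X) = 3.
Proof.
have p1 := omega_prim (isT : (0 < 1)%N).
set w := omega 1 in p1.
have w3 : w ^+ 3 = 1 by apply: (prim_expr_order p1).
have hc : w ^+ 2 + w + 1 = 0.
  have c1 : w != 1 by rewrite -[w]expr1 -(prim_order_dvd p1).
  have : (w - 1) * (w ^+ 2 + w + 1) = 0.
    have -> : (w - 1) * (w ^+ 2 + w + 1) = w ^+ 3 - 1 by ring.
    by rewrite w3 subrr.
  by move/eqP; rewrite mulf_eq0 subr_eq0 (negbTE c1) /= => /eqP.
rewrite /Nk expn1 big_mkcond /= big_nat_recr // big_nat_recr // big_nat_recr // big_geq //=.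
rewrite !rmorphB /= rmorph1 map_polyX !hornerE -/w expr1.
have -> : (1 - w) * (1 - w ^+ 2) = 3 - (w ^+ 2 + w + 1) + (w ^+ 3 - 1) by ring.
by rewrite hc w3 subrr subr0 addr0.
Qed.

Lemma dvd3_sub (x y : int) : (3 %| x - 3 * y)%Z = (3 %| x)%Z.
Proof. by rewrite rpredBr //; exact: (dvdz_mulr _ (dvdzz 3)). Qed.

Lemma final1 (h : {poly int}) : exists A B : int,
  3 * Nk 2 (1 + ('X - 1) ^+ 5 * h) =
    Nk 1 (1 - 'X + 9%:P * (A%:P + B%:P * (1 - 'X))) /\
  (3 %| A)%Z = (3 %| h.[1])%Z.
Proof.
have [h0 [h1 [h2 [-> Eh1]]]] := descF 5 h (isT : (0 < 1)%N).
have eX : 1 + ('X - 1) = ('X : {poly int}) by rewrite addrC subrK.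
have := ident1 ('X - 1) h0 h1 h2; rewrite eX.
have [s Es] := factor1 (h0 + h1 + h2).
set z := 'X - 1 in Es *.
set GG := Gf _ _; set Q0' := Q0 _ _ _ _; set Q2' := Q2 _ _ _ _; set Q5' := Q5 _ _ _ _.
set c0 := ((h0 + h1 + h2).[1])%:P in Es.
move=> E.
have [q3 E31] : exists q3 : {poly int}, 3 = Phi 1 * q3 - 'X ^+ 2 * z ^+ 2.
  by exists ('X ^+ 2 - 3 * 'X + 3); rewrite Phi1E /z; ring.
have [q4 E4] : exists q4 : {poly int}, z ^+ 4 = 9 * 'X ^+ 2 + Phi 1 * q4.
  by exists ('X ^+ 2 - 5 * 'X + 1); rewrite Phi1E /z; ring.
set v := 'X ^+ 2 * c0 + z * ('X ^+ 2 * (s + Q2') - 'X ^+ 4 * Q0' - z * Q5').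
have EP : (1 - 'X) * GG = (1 - 'X) + z ^+ 4 * v + Phi 1 * (- z ^+ 2 * (h0 + h1 + h2) * q3
     - z * Q0' * (Phi 1 * q3 ^+ 2 - 2 * q3 * 'X ^+ 2 * z ^+ 2) - z ^+ 3 * Q2' * q3).
  have -> : (1 - 'X) * GG = (1 - 'X) - z * (GG - 1) by rewrite /z; ring.
  rewrite E E31 Es /v; ring.
have [s0 [s1 [q' Ev]]] := red1 ('X ^+ 2 * v).
exists (s0 + s1), (- s1); split.
  rewrite -Nk1_lin -Nk_mul; apply: (Nk_congr (q := (- z ^+ 2 * (h0 + h1 + h2) * q3
     - z * Q0' * (Phi 1 * q3 ^+ 2 - 2 * q3 * 'X ^+ 2 * z ^+ 2) - z ^+ 3 * Q2' * q3) + q4 * v + 9 * q')) => //.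
  rewrite EP E4 polyC_natr !rmorphD !rmorphN /=.
  have -> : (9 * 'X ^+ 2 + Phi 1 * q4) * v = 9 * ('X ^+ 2 * v) + Phi 1 * q4 * v by ring.
  rewrite Ev; ring.
have := congr1 (horner^~ 1) Ev; rewrite /= !hornerE => E1.
rewrite Eh1 E1.
have -> : (1 + 1 + 1 ^+ 2) * q'.[1] + s0 + s1 = (s0 + s1) - 3 * (- q'.[1]) by ring.
by rewrite dvd3_sub.
Qed.

Lemma chain (e : nat)
  (stepe : forall k (h : {poly int}), (2 <= k)%N -> exists h' : {poly int},
     Nk k.+1 (1 + ('X - 1) ^+ e * h) = Nk k (1 + ('X - 1) ^+ e * h') /\
     (3 %| h'.[1])%Z = (3 %| h.[1])%Z)
  (d j : nat) (h : {poly int}) : (2 <= j)%N -> exists hj : {poly int},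
  Nk (d + j) (1 + ('X - 1) ^+ e * h) = Nk j (1 + ('X - 1) ^+ e * hj) /\
  (3 %| hj.[1])%Z = (3 %| h.[1])%Z.
Proof.
move=> j2; elim: d h => [|d IH] h; first by exists h.
have [h' [E1 D1]] := stepe (d + j)%N h (leq_trans j2 (leq_addl _ _)).
have [hj [E2 D2]] := IH h'.
by exists hj; rewrite addSn E1 E2 D2 D1.
Qed.

Unset Implicit Arguments.

Theorem lemma4p4 (m : int) (i : nat) (hi : (2 <= i)%N) :
  (forall h : {poly int},
     m%:~R = Nk i (1 + ('X - 1) ^+ 5 * h) ->
     (forall j : nat, (2 <= j <= i)%N ->
        exists hj : {poly int},
          m%:~R = Nk j (1 + ('X - 1) ^+ 5 * hj) /\
          ((3 %| hj.[1])%Z = (3 %| h.[1])%Z)) /\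
     (exists A B : int,
        (3 * m)%:~R = Nk 1 (1 - 'X + 9%:P * (A%:P + B%:P * (1 - 'X))) /\
        (~~ (3 %| h.[1])%Z -> ~~ (3 %| A)%Z) /\
        ((3 %| h.[1])%Z -> (3 %| A)%Z)))
  /\
  (forall t : {poly int},
     m%:~R = Nk i (1 + ('X - 1) ^+ 7 * t) ->
     forall j : nat, (2 <= j <= i)%N ->
        exists tj : {poly int},
          m%:~R = Nk j (1 + ('X - 1) ^+ 7 * tj) /\
          ((3 %| tj.[1])%Z = (3 %| t.[1])%Z)).
Proof.
split.
  move=> h Hm; split.
    move=> j /andP[j2 ji].
    have [hj [E D]] := chain step5 (i - j) h j2.
    by exists hj; rewrite Hm -E subnK.
  have [h2 [E2 D2]] := chain step5 (i - 2) h (leqnn 2).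
  rewrite subnK // in E2.
  have [A [B [EA DA]]] := final1 h2.
  exists A, B; split; last by rewrite DA D2.
  by rewrite intrM Hm E2 EA.
move=> t Ht j /andP[j2 ji].
have [tj [E D]] := chain step7 (i - j) t j2.
by exists tj; rewrite Ht -E subnK.
Qed.
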